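(* Let $\mathbf A\in\mathbb R^{m\times n}$ be a nonzero matrix of rank $r$ (full column rank or rank deficient) with smallest nonzero singular value $\sigma_r(\mathbf A)$, and let $\mathbf b\in\mathbb R^m$ be such that $\mathbf A\mathbf x=\mathbf b$ is consistent. Fix a row partition $\{\mathcal I_1,\dots,\mathcal I_s\}$ of $[m]$ and a column partition $\{\mathcal J_1,\dots,\mathcal J_t\}$ of $[n]$, let $\beta=\max_{(\mathcal I,\mathcal J)\in\mathcal P}\|\mathbf A_{\mathcal I,\mathcal J}\|_2^2/\|\mathbf A_{\mathcal I,\mathcal J}\|_F^2$ and $\rho=\max_{1\le j\le t}\sigma_1^2(\mathbf A_{:,\mathcal J_j})$. Let $\mathbf x^0\in\mathbb R^n$ be arbitrary and let $\mathbf x^k$ be the $k$th iterate of the doubly stochastic block Gauss--Seidel (DSBGS) algorithm with step size $\alpha$ described in the context. Then: (i) if $t=n$ and $0<\alpha<2\sigma_r^2(\mathbf A)/(\beta\|\mathbf A\|_F^2)$, then for every $k\ge0$ $$\mathbb E\big[\|\mathbf A\mathbf x^k-\mathbf b\|_2^2\big]\le\Big(1+\beta\alpha^2-\frac{2\alpha\sigma_r^2(\mathbf A)}{\|\mathbf A\|_F^2}\Big)^k\|\mathbf A\mathbf x^0-\mathbf b\|_2^2;$$ (ii) if $t<n$ and $0<\alpha<2\sigma_r^2(\mathbf A)/(t\rho\beta)$, then for every $k\ge0$ $$\mathbb E\big[\|\mathbf A\mathbf x^k-\mathbf b\|_2^2\big]\le\Big(1-\frac{2\alpha\sigma_r^2(\mathbf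 A)-t\rho\beta\alpha^2}{\|\mathbf A\|_F^2}\Big)^k\|\mathbf A\mathbf x^0-\mathbf b\|_2^2.$$
   Context: Notation: $\|\cdot\|_F$ the Frobenius norm, $\|\cdot\|_2$ the Euclidean norm for vectors and spectral norm for matrices, $\sigma_1(\cdot)$ the largest singular value. For $\mathcal I\subseteq[m]=\{1,\dots,m\}$ and $\mathcal J\subseteq[n]$, $\mathbf A_{\mathcal I,\mathcal J}$ is the submatrix of $\mathbf A$ with rows indexed by $\mathcal I$ and columns indexed by $\mathcal J$; $\mathbf A_{:,\mathcal J}$ is the column submatrix indexed by $\mathcal J$; $\mathbf I_{:,\mathcal J}$ denotes the columns of the identity matrix (of the appropriate order) indexed by $\mathcal J$. DSBGS algorithm: the sets $\mathcal I_1,\dots,\mathcal I_s$ are nonempty, pairwise disjoint with union $[m]$, and $\mathcal J_1,\dots,\mathcal J_t$ are nonempty, pairwise disjoint with union $[n]$; $\mathcal P=\{\mathcal I_1,\dots,\mathcal I_s\}\times\{\mathcal J_1,\dots,\mathcal J_t\}$ (in the definition of $\beta$ the maximum is over blocks with $\mathbf A_{\mathcal I,\mathcal J}\neq0$). Given $\alpha>0$ and $\mathbf x^0$, for $k=1,2,\dots$: pick $(\mathcal I,\mathcal J)\in\mathcal P$ (independently of previous choices) with probability $\|\mathbf A_{\mathcal I,\mathcal J}\|_F^2/\|\mathbf A\|_F^2$, and set $$\mathbf x^k=\mathbf x^{k-1}-\alpha\,\frac{\mathbf I_{:,\mathcal J}(\mathbf A_{\mathcal I,\mathcal J})^{T}(\mathbf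 I_{:,\mathcal I})^{T}}{\|\mathbf A_{\mathcal I,\mathcal J}\|_F^2}\,(\mathbf A\mathbf x^{k-1}-\mathbf b).$$ The expectation $\mathbb E$ is over the random choices of the blocks. *)

(* Defs.v *)
From HB Require Import structures.
From mathcomp Require Import all_boot all_order all_algebra.
From mathcomp Require Import classical_sets reals.
Set Implicit Arguments. Unset Strict Implicit. Unset Printing Implicit Defensive.
Import Order.TTheory GRing.Theory Num.Theory.
Local Open Scope ring_scope.
Local Open Scope classical_set_scope.

Section Defs.
Variable R : realType.

Definition vnorm2 (k : nat) (v : 'cV[R]_k) : R := \sum_i (v i 0) ^+ 2.

Definition frob2 (p q : nat) (M : 'M[R]_(p, q)) : R :=
  \sum_i \sum_j (M i j) ^+ 2.

Definition sqsingvals (p q : nat) (M : 'M[R]_(p, q)) : set R :=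
  [set l | root (char_poly (M^T *m M)) l].

Definition sigma1sq (p q : nat) (M : 'M[R]_(p, q)) : R := sup (sqsingvals M).

Definition sigmarsq (p q : nat) (M : 'M[R]_(p, q)) : R :=
  inf [set l | sqsingvals M l /\ l != 0].

(* The block A_{I,J}, represented (with identical nonzero singular values and
   Frobenius norm) as the m x n matrix equal to A on I x J and 0 elsewhere;
   in particular I_{:,J} A_{I,J}^T I_{:,I}^T = (blk I J A)^T. *)
Definition blk (m n : nat) (I : {set 'I_m}) (J : {set 'I_n}) (A : 'M[R]_(m, n))
  : 'M[R]_(m, n) :=
  \matrix_(i, j) (if (i \in I) && (j \in J) then A i j else 0).

Definition colblk (m n : nat) (J : {set 'I_n}) (A : 'M[R]_(m, n)) : 'M[R]_(m, n) :=
  blk [set: 'I_m] J A.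

Definition dsbgs_step (m n : nat) (A : 'M[R]_(m, n)) (b : 'cV[R]_m) (alpha : R)
  (I : {set 'I_m}) (J : {set 'I_n}) (x : 'cV[R]_n) : 'cV[R]_n :=
  x - (alpha / frob2 (blk I J A)) *: ((blk I J A)^T *m (A *m x - b)).

Definition blkprob (m n : nat) (A : 'M[R]_(m, n)) (I : {set 'I_m}) (J : {set 'I_n})
  : R := frob2 (blk I J A) / frob2 A.

(* dsbgs_expect k x f = E[f(x^k)] where x^0 = x and the blocks are chosen
   i.i.d. from PI x PJ with the probabilities above (expectation of a
   function of the k-step Markov chain, expanded over the first choice). *)
Fixpoint dsbgs_expect (m n : nat) (A : 'M[R]_(m, n)) (b : 'cV[R]_m) (alpha : R)
  (PI : {set {set 'I_m}}) (PJ : {set {set 'I_n}}) (k : nat)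
  (x : 'cV[R]_n) (f : 'cV[R]_n -> R) : R :=
  match k with
  | 0%N => f x
  | k'.+1 => \sum_(I in PI) \sum_(J in PJ)
               blkprob A I J * dsbgs_expect A b alpha PI PJ k'
                                 (dsbgs_step A b alpha I J x) f
  end.

(* beta = max over blocks with A_{I,J} <> 0 of ||A_{I,J}||_2^2/||A_{I,J}||_F^2
   (all ratios are nonnegative, so 0 is a neutral starting value) *)
Definition dsbgs_beta (m n : nat) (A : 'M[R]_(m, n))
  (PI : {set {set 'I_m}}) (PJ : {set {set 'I_n}}) : R :=
  \big[Num.max/0]_(I in PI) \big[Num.max/0]_(J in PJ | blk I J A != 0)
     (sigma1sq (blk I J A) / frob2 (blk I J A)).

Definition dsbgs_rho (m n : nat) (A : 'M[R]_(m, n)) (PJ : {set {set 'I_n}}) : R :=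
  \big[Num.max/0]_(J in PJ) sigma1sq (colblk J A).

End Defs.

(* Main.v *)
Require Import Defs.
From HB Require Import structures.
From mathcomp Require Import all_boot all_order all_algebra.
From mathcomp Require Import reals boolp complex.
From mathcomp Require Import ring lra.
Import Order.TTheory GRing.Theory Num.Theory.
Local Open Scope ring_scope.
Set Implicit Arguments. Unset Strict Implicit. Unset Printing Implicit Defensive.

Section Basic.
Variable R : realType.

Lemma CS_fun (I : finType) (a b : I -> R) :
  (\sum_i a i * b i) ^+ 2 <= (\sum_i a i ^+ 2) * (\sum_i b i ^+ 2).
Proof.
set p := \sum_i a i * b i; set A := \sum_i a i ^+ 2; set B := \sum_i b i ^+ 2.
have B0 : 0 <= B by apply: sumr_ge0 => i _; exact: sqr_ge0.
have A0 : 0 <= A by apply: sumr_ge0 => i _; exact: sqr_ge0.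
have [Bz|Bnz] := eqVneq B 0.
  have bz i : b i = 0.
    apply/eqP; rewrite -sqrf_eq0; apply/eqP.
    by apply: (psumr_eq0P _ Bz) => // j _; exact: sqr_ge0.
  rewrite /p big1 ?expr0n ?mulr0 //=; first by rewrite Bz mulr0.
  by move=> i _; rewrite bz mulr0.
have Bp : 0 < B by rewrite lt_def Bnz B0.
have H : 0 <= \sum_i (B * a i - p * b i) ^+ 2 by apply: sumr_ge0 => i _; exact: sqr_ge0.
have E : \sum_i (B * a i - p * b i) ^+ 2 = B * (A * B - p ^+ 2).
  have -> : \sum_i (B * a i - p * b i) ^+ 2 =
     B ^+ 2 * A - 2 * B * p * p + p ^+ 2 * B.
    transitivity (\sum_i (B ^+ 2 * a i ^+ 2 - 2 * B * p * (a i * b i) + p ^+ 2 * b i ^+ 2)).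
      by apply: eq_bigr => i _; ring.
    rewrite big_split sumrB /= -!mulr_sumr -/A -/p -/B; ring.
  ring.
rewrite E in H.
by rewrite -subr_ge0 -(pmulr_rge0 _ Bp).
Qed.

Definition dot k (u v : 'cV[R]_k) := \sum_i u i 0 * v i 0.

Lemma vnorm2_ge0 k (u : 'cV[R]_k) : 0 <= vnorm2 u.
Proof. by apply: sumr_ge0 => i _; exact: sqr_ge0. Qed.

Lemma frob2_ge0 p q (M : 'M[R]_(p, q)) : 0 <= frob2 M.
Proof. by apply: sumr_ge0 => i _; apply: sumr_ge0 => j _; exact: sqr_ge0. Qed.

Lemma frob2_eq0 p q (M : 'M[R]_(p, q)) : frob2 M = 0 -> M = 0.
Proof.
move=> H; apply/matrixP => i j; rewrite mxE.
have Hi : \sum_j M i j ^+ 2 = 0.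
  apply: (psumr_eq0P _ H) => // i' _; apply: sumr_ge0 => j' _; exact: sqr_ge0.
apply/eqP; rewrite -sqrf_eq0; apply/eqP.
by apply: (psumr_eq0P _ Hi) => // j' _; exact: sqr_ge0.
Qed.

Lemma CS_vec k (u v : 'cV[R]_k) : dot u v ^+ 2 <= vnorm2 u * vnorm2 v.
Proof. exact: CS_fun. Qed.

Lemma vnorm2_trmx k (u : 'cV[R]_k) : vnorm2 u = (u^T *m u) 0 0.
Proof. by rewrite mxE; apply: eq_bigr => i _; rewrite mxE expr2. Qed.

Lemma dot_trmx k (u v : 'cV[R]_k) : dot u v = (u^T *m v) 0 0.
Proof. by rewrite mxE; apply: eq_bigr => i _; rewrite mxE. Qed.

Lemma vnorm2_sub k (r u : 'cV[R]_k) (g : R) :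
  vnorm2 (r - g *: u) = vnorm2 r - 2 * g * dot r u + g ^+ 2 * vnorm2 u.
Proof.
rewrite /vnorm2 /dot !mulr_sumr -sumrB -big_split /=.
by apply: eq_bigr => i _; rewrite !mxE; ring.
Qed.

Lemma frob_bound p q (M : 'M[R]_(p, q)) (v : 'cV[R]_q) :
  vnorm2 (M *m v) <= frob2 M * vnorm2 v.
Proof.
rewrite /vnorm2 /frob2 mulr_suml; apply: ler_sum => i _.
rewrite mxE; exact: (CS_fun (fun j => M i j) (fun j => v j 0)).
Qed.

Lemma vnorm2_eq0 k (u : 'cV[R]_k) : vnorm2 u = 0 -> u = 0.
Proof.
move=> H; apply/matrixP => i j; rewrite mxE ord1.
apply/eqP; rewrite -sqrf_eq0; apply/eqP.
by apply: (psumr_eq0P _ H) => // j' _; exact: sqr_ge0.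
Qed.



Local Notation C := (R[i]).
Local Notation f := (real_complex R).

Lemma realC (x : R) : f x \is Num.real.
Proof.
rewrite realE ler0c (_ : 0 = f 0) // lecR; exact: le_total.
Qed.

Lemma conjC_f (x : R) : (f x)^* = f x.
Proof. exact: conj_Creal (realC x). Qed.

Lemma ReK (z : C) : z \is Num.real -> f (complex.Re z) = z.
Proof. move=> zr; have := complexRe z; rewrite /= => ->; exact/Creal_ReP. Qed.

Local Open Scope sesquilinear_scope.

Lemma diag_form n (w : 'rV[C]_n) (E : 'rV[C]_n) :
  (w *m diag_mx E *m w ^t*) 0 0 = \sum_i E 0 i * (w 0 i * (w 0 i)^*).
Proof.
rewrite mul_mx_diag !mxE; apply: eq_bigr => i _; rewrite !mxE.
by rewrite mulrCA mulrA.
Qed.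

Lemma spec_real n (S : 'M[R]_n) : S^T = S ->
 exists d : 'I_n -> R, (forall i, root (char_poly S) (d i)) /\
   forall v : 'rV[R]_n, exists c : 'I_n -> R, (forall i, 0 <= c i) /\
     (v *m v^T) 0 0 = \sum_i c i /\ (v *m S *m v^T) 0 0 = \sum_i d i * c i /\
     (v *m S *m S *m v^T) 0 0 = \sum_i d i ^+ 2 * c i.
Proof.
move=> HS.
pose Sc := map_mx f S.
have Sh : Sc \is hermsymmx.
  apply: realsym_hermsym.
    apply/is_hermitianmxP; rewrite expr0 scale1r; apply/matrixP => i j.
    by rewrite !mxE -[in LHS]HS mxE.
  by apply/mxOverP => i j; rewrite mxE realC.
have /orthomx_spectralP HSc := hermitian_normalmx Sh.
set P := spectralmx Sc in HSc; set D := spectral_diag Sc in HSc.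
have PU : P \is unitarymx := spectral_unitarymx Sc.
have Pu := unitarymx_unit PU.
have iP := invmx_unitary PU.
have PPt : P *m P^t* = 1%:M by apply/unitarymxP.
have PtP : P^t* *m P = 1%:M by rewrite -iP mulVmx.
have Dr := hermitian_spectral_diag_real Sh.
pose d i := complex.Re (D 0 i).
have dE i : f (d i) = D 0 i by apply: ReK; exact: (mxOverP Dr 0 i).
exists d; split.
  move=> i; rewrite -(fmorph_root f) map_char_poly -eigenvalue_root_char /= dE; change (eigenvalue Sc (D 0 i)).
  apply/eigenvalueP; exists (delta_mx 0 i *m P).
    rewrite HSc !mulmxA iP mulmxtVK //.
    rewrite scalemxAl; congr (_ *m _); apply/matrixP => a b.
    rewrite mul_mx_diag !mxE ord1 eqxx /=; case: (b =P i) => [->|_]; by rewrite ?mulr1 ?mul1r ?mulr0 ?mul0r.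
  apply/negP => /eqP H0.
  have := congr1 (mulmx^~ (invmx P)) H0; rewrite mulmxK // mul0mx.
  by move/matrixP => /(_ 0 i); rewrite !mxE !eqxx /= => /eqP; rewrite oner_eq0.
move=> v.
pose vc := map_mx f v.
pose w := vc *m P^t*.
have vcT : vc^T = vc^t* by apply/matrixP => a b; rewrite !mxE conjC_f.
have wT : w^t* = P *m vc^t*.
  by rewrite /w trmx_mul map_mxM trmxCK.
have wc i : w 0 i * (w 0 i)^* \is Num.real by apply: ger0_real; exact: mul_conjC_ge0.
pose c i := complex.Re (w 0 i * (w 0 i)^*).
exists c; split.
  move=> i; rewrite -lecR ReK //; exact: mul_conjC_ge0.
have key (X : 'M[R]_n) (E : 'rV[C]_n) :
   vc *m map_mx f X *m vc^T = w *m diag_mx E *m w^t* ->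
   (forall i, E 0 i \is Num.real) ->
   (v *m X *m v^T) 0 0 = \sum_i complex.Re (E 0 i) * c i.
  move=> HX Er; apply: complexI.
  rewrite rmorph_sum /=; under eq_bigr => i _ do rewrite rmorphM /= !ReK //.
  by rewrite -diag_form -HX /vc map_trmx -!map_mxM [in RHS]mxE.
split.
  have -> : v *m v^T = v *m 1%:M *m v^T by rewrite mulmx1.
  have -> : \sum_i c i = \sum_i complex.Re ((const_mx 1 : 'rV[C]_n) 0 i) * c i.
    by apply: eq_bigr => i _; rewrite [const_mx _ _ _]mxE /= mul1r.
  apply: key; last by move=> i; rewrite mxE real1.
  by rewrite map_mx1 mulmx1 diag_const_mx mulmx1 vcT wT /w mulmxA -(mulmxA vc) PtP mulmx1.
split.
  rewrite (eq_bigr (fun i => complex.Re (D 0 i) * c i)) //.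
  apply: key; last by move=> i; exact: (mxOverP Dr 0 i).
  by rewrite -/Sc HSc iP vcT wT /w !mulmxA.
have -> : \sum_i d i ^+ 2 * c i = \sum_i complex.Re ((\row_j (D 0 j * D 0 j)) 0 i) * c i.
  by apply: eq_bigr => i _; rewrite mxE -!dE -rmorphM /= expr2.
rewrite -(mulmxA v S S); apply: key; last by move=> i; rewrite mxE rpredM //; exact: (mxOverP Dr 0 i).
rewrite map_mxM -/Sc HSc iP vcT wT /w -mulmx_diag !mulmxA.
by rewrite -[_ *m P *m P^t*]mulmxA PPt mulmx1.
Qed.
End Basic.
Section Sig.
Variable R : realType.

Lemma psd_root p q (M : 'M[R]_(p,q)) l : root (char_poly (M^T *m M)) l -> 0 <= l.
Proof.
rewrite -eigenvalue_root_char => /eigenvalueP [v Hv vn0].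
have H1 : (v *m (M^T *m M) *m v^T) 0 0 = l * (v *m v^T) 0 0.
  by rewrite Hv -scalemxAl mxE.
have H2 : (v *m (M^T *m M) *m v^T) 0 0 = vnorm2 (M *m v^T).
  by rewrite vnorm2_trmx trmx_mul trmxK !mulmxA.
have H3 : (v *m v^T) 0 0 = vnorm2 v^T by rewrite vnorm2_trmx trmxK.
have Hp : 0 < vnorm2 v^T.
  rewrite lt_def vnorm2_ge0 andbT; apply/eqP => /vnorm2_eq0 /eqP.
  by rewrite trmx_eq0; apply/negP.
have := vnorm2_ge0 (M *m v^T); rewrite -H2 H1 H3.
by rewrite pmulr_lge0.
Qed.

Lemma sqsingvals_ub p q (M : 'M[R]_(p,q)) : classical_sets.has_ubound (sqsingvals M).
Proof.
have [b Hb] := Cauchy_root_bound (monic_neq0 (char_poly_monic (M^T *m M))).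
exists b => l Hl; exact: le_trans (ler_norm l) (Hb l Hl).
Qed.

Lemma sigma1sq_ub p q (M : 'M[R]_(p,q)) l : root (char_poly (M^T *m M)) l -> l <= sigma1sq M.
Proof. move=> Hl; exact: (ub_le_sup (sqsingvals_ub M)). Qed.

Lemma sigma1sq_ge0 p q (M : 'M[R]_(p,q)) : 0 <= sigma1sq M.
Proof.
case: (pselect (exists l, root (char_poly (M^T *m M)) l)) => [[l Hl]|Hn].
  exact: le_trans (psd_root Hl) (sigma1sq_ub Hl).
rewrite /sigma1sq sup_out // => -[[l Hl] _]; apply: Hn; by exists l.
Qed.

Lemma symMM p q (M : 'M[R]_(p,q)) : (M^T *m M)^T = M^T *m M.
Proof. by rewrite trmx_mul trmxK. Qed.

Lemma F1 p q (M : 'M[R]_(p,q)) (v : 'cV[R]_q) :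
  vnorm2 (M *m v) <= sigma1sq M * vnorm2 v.
Proof.
have [d [Hd Hc]] := spec_real (symMM M).
have [c [c0 [E1 [E2 _]]]] := Hc v^T.
have -> : vnorm2 (M *m v) = \sum_i d i * c i.
  by rewrite -E2 vnorm2_trmx trmx_mul trmxK !mulmxA.
have -> : vnorm2 v = \sum_i c i by rewrite -E1 vnorm2_trmx trmxK.
rewrite mulr_sumr; apply: ler_sum => i _.
by apply: ler_wpM2r => //; exact: sigma1sq_ub.
Qed.

Lemma sigmar_bound m n (A : 'M[R]_(m,n)) (y : 'cV[R]_n) :
  sigmarsq A * vnorm2 (A *m y) <= vnorm2 (A^T *m (A *m y)).
Proof.
have [d [Hd Hc]] := spec_real (symMM A).
have [c [c0 [E1 [E2 E3]]]] := Hc y^T.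
have -> : vnorm2 (A *m y) = \sum_i d i * c i.
  by rewrite -E2 vnorm2_trmx trmx_mul trmxK !mulmxA.
have -> : vnorm2 (A^T *m (A *m y)) = \sum_i d i ^+ 2 * c i.
  by rewrite -E3 vnorm2_trmx !trmx_mul !trmxK !mulmxA.
have lb : classical_sets.has_lbound (classical_sets.mkset (fun l => sqsingvals A l /\ l != 0)).
  by exists 0 => l [Hl _]; exact: psd_root Hl.
rewrite mulr_sumr; apply: ler_sum => i _.
have d0 := psd_root (Hd i); have := c0 i.
have [->|dn0] := eqVneq (d i) 0; first by rewrite !mul0r expr0n /= mul0r mulr0.
have : sigmarsq A <= d i.
  have h := ge_inf lb; move: (h (d i)); rewrite /sigmarsq => H; exact: H (conj (Hd i) dn0).
move=> h1 h2; have h3 : 0 <= (d i - sigmarsq A) * (d i * c i) by apply: mulr_ge0; [rewrite subr_ge0 | apply: mulr_ge0].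
nra.
Qed.

Lemma F1T p q (B : 'M[R]_(p,q)) (r : 'cV[R]_p) :
  vnorm2 (B^T *m r) <= sigma1sq B * vnorm2 r.
Proof.
set w := B^T *m r.
have Hw : vnorm2 w = dot r (B *m w).
  by rewrite vnorm2_trmx dot_trmx /w trmx_mul trmxK !mulmxA.
have h1 := CS_vec r (B *m w).
have h2 := F1 B w.
have s0 := sigma1sq_ge0 B.
have r0 := vnorm2_ge0 r.
have w0 := vnorm2_ge0 w.
rewrite -Hw in h1.
have [wz|wnz] := eqVneq (vnorm2 w) 0; first by rewrite wz; exact: mulr_ge0.
have wp : 0 < vnorm2 w by rewrite lt_def wnz w0.
have h3 : vnorm2 w ^+ 2 <= vnorm2 r * (sigma1sq B * vnorm2 w).
  exact: le_trans h1 (ler_wpM2l r0 h2).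
rewrite expr2 in h3.
have : vnorm2 w * vnorm2 w <= (sigma1sq B * vnorm2 r) * vnorm2 w by lra.
by rewrite ler_pM2r.
Qed.
End Sig.


Section Part.
Variable R : realType.

Lemma ind1 (T : finType) (P : {set {set T}}) (x : T) (a : R) :
  partition P [set: T] -> \sum_(X in P) (if x \in X then a else 0) = a.
Proof.
move=> /and3P [/eqP cov triv _].
have xc : x \in cover P by rewrite cov inE.
rewrite (bigD1 (pblock P x)) ?pblock_mem //= mem_pblock xc big1 ?addr0 //.
move=> X /andP [XP Xne]; case: ifP => // xX.
by move: Xne; rewrite (def_pblock triv XP xX) eqxx.
Qed.

Lemma ind2 (T1 T2 : finType) (P1 : {set {set T1}}) (P2 : {set {set T2}}) x y (a : R) :
  partition P1 [set: T1] -> partition P2 [set: T2] ->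
  \sum_(X in P1) \sum_(Y in P2) (if (x \in X) && (y \in Y) then a else 0) = a.
Proof.
move=> H1 H2.
rewrite -[RHS](ind1 x a H1); apply: eq_bigr => X _.
case: (x \in X) => /=; first exact: ind1.
by rewrite big1.
Qed.

Lemma sum_blk m n (PI : {set {set 'I_m}}) (PJ : {set {set 'I_n}}) (F : 'I_m -> 'I_n -> R) :
  partition PI [set: 'I_m] -> partition PJ [set: 'I_n] ->
  \sum_(I in PI) \sum_(J in PJ) \sum_i \sum_j (if (i \in I) && (j \in J) then F i j else 0)
  = \sum_i \sum_j F i j.
Proof.
move=> H1 H2.
transitivity (\sum_i \sum_j \sum_(I in PI) \sum_(J in PJ) (if (i \in I) && (j \in J) then F i j else 0)).
  under eq_bigr => I _ do rewrite exchange_big.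
  rewrite exchange_big; apply: eq_bigr => i _.
  under eq_bigr => I _ do rewrite exchange_big.
  by rewrite exchange_big.
by apply: eq_bigr => i _; apply: eq_bigr => j _; exact: ind2.
Qed.

Definition mask k (I : {set 'I_k}) (r : 'cV[R]_k) : 'cV[R]_k :=
  \matrix_(i, j) (if i \in I then r i j else 0).

Lemma sum_mask k (P : {set {set 'I_k}}) (r : 'cV[R]_k) :
  partition P [set: 'I_k] -> \sum_(I in P) vnorm2 (mask I r) = vnorm2 r.
Proof.
move=> H; rewrite /vnorm2 exchange_big; apply: eq_bigr => i _.
rewrite -[RHS](ind1 i _ H); apply: eq_bigr => I _.
by rewrite mxE; case: (i \in I); rewrite ?expr0n.
Qed.

Lemma sum_colblk m n (PJ : {set {set 'I_n}}) (A : 'M[R]_(m, n)) :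
  partition PJ [set: 'I_n] -> \sum_(J in PJ) frob2 (colblk J A) = frob2 A.
Proof.
move=> H; rewrite /frob2 exchange_big; apply: eq_bigr => i _.
rewrite exchange_big; apply: eq_bigr => j _.
rewrite -[RHS](ind1 j _ H); apply: eq_bigr => J _.
by rewrite mxE in_setT /=; case: (j \in J); rewrite ?expr0n.
Qed.

Lemma sum_frob_blk m n (PI : {set {set 'I_m}}) (PJ : {set {set 'I_n}}) (A : 'M[R]_(m, n)) :
  partition PI [set: 'I_m] -> partition PJ [set: 'I_n] ->
  \sum_(I in PI) \sum_(J in PJ) frob2 (blk I J A) = frob2 A.
Proof.
move=> H1 H2; rewrite /frob2 -(sum_blk (fun i j => A i j ^+ 2) H1 H2).
apply: eq_bigr => I _; apply: eq_bigr => J _; apply: eq_bigr => i _; apply: eq_bigr => j _.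
by rewrite mxE; case: ifP; rewrite ?expr0n.
Qed.

Lemma sum_blk_mx m n (PI : {set {set 'I_m}}) (PJ : {set {set 'I_n}}) (A : 'M[R]_(m, n)) :
  partition PI [set: 'I_m] -> partition PJ [set: 'I_n] ->
  \sum_(I in PI) \sum_(J in PJ) blk I J A = A.
Proof.
move=> H1 H2; apply/matrixP => i j; rewrite summxE.
under eq_bigr => I _ do rewrite summxE.
rewrite -[RHS](ind2 i j (A i j) H1 H2).
by apply: eq_bigr => I _; apply: eq_bigr => J _; rewrite mxE.
Qed.

Lemma blkT_mask m n I J (A : 'M[R]_(m, n)) (r : 'cV[R]_m) :
  (blk I J A)^T *m r = (blk I J A)^T *m mask I r.
Proof.
apply/matrixP => j k; rewrite !mxE; apply: eq_bigr => i _; rewrite !mxE.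
by case: ifP => [/andP[hi _]|_]; rewrite ?hi ?mul0r.
Qed.

Lemma A_colblk m n I J (A : 'M[R]_(m, n)) (r : 'cV[R]_m) :
  A *m ((blk I J A)^T *m r) = colblk J A *m ((blk I J A)^T *m r).
Proof.
apply/matrixP => i k; rewrite !mxE; apply: eq_bigr => j _; rewrite !mxE in_setT /=.
case hj : (j \in J) => //.
rewrite big1 ?mulr0 // => l _; rewrite !mxE hj andbF mul0r //.
Qed.

Lemma dotD k (r u v : 'cV[R]_k) : dot r (u + v) = dot r u + dot r v.
Proof. by rewrite /dot -big_split; apply: eq_bigr => i _; rewrite mxE mulrDr. Qed.

Lemma dot0 k (r : 'cV[R]_k) : dot r 0 = 0.
Proof. by rewrite /dot big1 // => i _; rewrite mxE mulr0. Qed.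

Lemma sum_dot m n (PI : {set {set 'I_m}}) (PJ : {set {set 'I_n}}) (A : 'M[R]_(m, n)) r :
  partition PI [set: 'I_m] -> partition PJ [set: 'I_n] ->
  \sum_(I in PI) \sum_(J in PJ) dot r (A *m ((blk I J A)^T *m r)) = vnorm2 (A^T *m r).
Proof.
move=> H1 H2.
pose phi (B : 'M[R]_(m, n)) := dot r (A *m (B^T *m r)).
have phiD : {morph phi : B1 B2 / B1 + B2 >-> B1 + B2}.
  by move=> B1 B2; rewrite /phi linearD /= mulmxDl mulmxDr dotD.
have phi0 : phi 0 = 0 by rewrite /phi trmx0 mul0mx mulmx0 dot0.
have E : phi A = vnorm2 (A^T *m r).
  by rewrite /phi vnorm2_trmx dot_trmx trmx_mul trmxK !mulmxA.
rewrite -E -{3}(sum_blk_mx A H1 H2) (big_morph phi phiD phi0).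
by apply: eq_bigr => I _; rewrite (big_morph phi phiD phi0).
Qed.

End Part.


Section Main.
Variable R : realType.
Variables (m n : nat) (A : 'M[R]_(m, n)) (b : 'cV[R]_m).
Variables (PI : {set {set 'I_m}}) (PJ : {set {set 'I_n}}) (alpha : R).
Hypothesis HPI : partition PI [set: 'I_m].
Hypothesis HPJ : partition PJ [set: 'I_n].

Local Notation F := (frob2 A).
Local Notation r x := (A *m x - b).

Lemma step_res I J x :
  A *m dsbgs_step A b alpha I J x - b =
  r x - (alpha / frob2 (blk I J A)) *: (A *m ((blk I J A)^T *m r x)).
Proof. by rewrite /dsbgs_step mulmxBr -scalemxAr addrAC. Qed.

Lemma vnorm2_0 k : vnorm2 (0 : 'cV[R]_k) = 0.
Proof. by rewrite /vnorm2 big1 // => i _; rewrite mxE expr0n. Qed.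

Lemma term_eq I J x : F != 0 ->
  blkprob A I J * vnorm2 (A *m dsbgs_step A b alpha I J x - b) =
  vnorm2 (r x) * (frob2 (blk I J A) / F)
  - 2 * (alpha / F) * dot (r x) (A *m ((blk I J A)^T *m r x))
  + alpha ^+ 2 / F * (vnorm2 (A *m ((blk I J A)^T *m r x)) / frob2 (blk I J A)).
Proof.
move=> Fn0; rewrite step_res vnorm2_sub /blkprob.
have [fz|fnz] := eqVneq (frob2 (blk I J A)) 0.
  have B0 := frob2_eq0 fz.
  rewrite fz B0 trmx0 mul0mx mulmx0 dot0 vnorm2_0.
  by rewrite !(mul0r, mulr0, subr0, addr0).
by field; apply/andP.
Qed.

Definition Qs x := \sum_(I in PI) \sum_(J in PJ)
  vnorm2 (A *m ((blk I J A)^T *m r x)) / frob2 (blk I J A).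

Lemma sum_terms x : F != 0 ->
  \sum_(I in PI) \sum_(J in PJ) blkprob A I J * vnorm2 (A *m dsbgs_step A b alpha I J x - b)
  = vnorm2 (r x) - 2 * (alpha / F) * vnorm2 (A^T *m r x) + alpha ^+ 2 / F * Qs x.
Proof.
move=> Fn0.
under eq_bigr => I _ do under eq_bigr => J _ do rewrite term_eq //.
under eq_bigr => I _ do rewrite big_split sumrB /= -!mulr_sumr.
rewrite big_split sumrB /= -!mulr_sumr (sum_dot A (r x) HPI HPJ).
congr (_ - _ + _).
rewrite -[in RHS](mulr1 (vnorm2 _)); congr (_ * _).
transitivity ((\sum_(I in PI) \sum_(J in PJ) frob2 (blk I J A)) / F).
  by rewrite mulr_suml; apply: eq_bigr => I _; rewrite mulr_suml.
by rewrite sum_frob_blk // divff.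
Qed.


Lemma one_step K x xs : A *m xs = b -> 0 <= alpha -> 0 < F ->
  Qs x <= K * vnorm2 (r x) ->
  \sum_(I in PI) \sum_(J in PJ) blkprob A I J * vnorm2 (A *m dsbgs_step A b alpha I J x - b)
  <= (1 - 2 * alpha * sigmarsq A / F + alpha ^+ 2 * K / F) * vnorm2 (r x).
Proof.
move=> Hxs a0 Fp HQ.
rewrite sum_terms ?gt_eqF //.
have hN : sigmarsq A * vnorm2 (r x) <= vnorm2 (A^T *m r x).
  have -> : r x = A *m (x - xs) by rewrite mulmxBr Hxs.
  exact: sigmar_bound.
have aF : 0 <= alpha / F by rewrite divr_ge0 // ltW.
have a2F : 0 <= alpha ^+ 2 / F by rewrite divr_ge0 ?exprn_ge0 // ltW.
have h1 := ler_wpM2l aF hN.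
have h2 := ler_wpM2l a2F HQ.
lra.
Qed.

Definition betaD := dsbgs_beta A PI PJ.
Definition rhoD := dsbgs_rho A PJ.

Lemma beta_ge0 : 0 <= betaD.
Proof. exact: bigmax_ge_id. Qed.

Lemma rho_ge0 : 0 <= rhoD.
Proof. exact: bigmax_ge_id. Qed.

Lemma ratio_le_beta I J : I \in PI -> J \in PJ -> blk I J A != 0 ->
  sigma1sq (blk I J A) / frob2 (blk I J A) <= betaD.
Proof.
move=> HI HJ Bn0.
apply: le_trans (le_bigmax_cond _ _ HI).
apply: le_bigmax_cond.
by rewrite HJ Bn0.
Qed.

Lemma sigma_le_rho J : J \in PJ -> sigma1sq (colblk J A) <= rhoD.
Proof. move=> HJ; exact: (le_bigmax_cond _ _ HJ). Qed.

Lemma term_bound X I J x : I \in PI -> J \in PJ -> 0 <= X ->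
  (forall w, vnorm2 (colblk J A *m w) <= X * vnorm2 w) ->
  vnorm2 (A *m ((blk I J A)^T *m r x)) / frob2 (blk I J A)
  <= X * betaD * vnorm2 (mask I (r x)).
Proof.
move=> HI HJ X0 HX.
have b0 := beta_ge0.
have vm0 := vnorm2_ge0 (mask I (r x)).
have [B0|Bn0] := eqVneq (blk I J A) 0.
  rewrite B0 /frob2 big1 ?invr0 ?mulr0; first by rewrite !mulr_ge0.
  by move=> i _; rewrite big1 // => j _; rewrite mxE expr0n.
have fp : 0 < frob2 (blk I J A).
  rewrite lt_def frob2_ge0 andbT; apply/eqP => /frob2_eq0 H; by rewrite H eqxx in Bn0.
have hr := ratio_le_beta HI HJ Bn0.
rewrite ler_pdivrMr // in hr.
rewrite A_colblk.
have h1 := HX ((blk I J A)^T *m r x).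
have h2 : vnorm2 ((blk I J A)^T *m r x) <= sigma1sq (blk I J A) * vnorm2 (mask I (r x)).
  by rewrite blkT_mask; exact: F1T.
rewrite ler_pdivrMr //.
have h3 := ler_wpM2l X0 h2.
have h4 : sigma1sq (blk I J A) * vnorm2 (mask I (r x)) <= betaD * frob2 (blk I J A) * vnorm2 (mask I (r x)).
  exact: ler_wpM2r.
have h5 := ler_wpM2l X0 h4.
apply: le_trans h1 _; apply: le_trans h3 _; apply: le_trans h5 _.
by rewrite !mulrA mulrAC.
Qed.

Lemma Q1 x : Qs x <= (betaD * F) * vnorm2 (r x).
Proof.
apply: le_trans (_ : \sum_(I in PI) \sum_(J in PJ) frob2 (colblk J A) * betaD * vnorm2 (mask I (r x)) <= _).
  apply: ler_sum => I HI; apply: ler_sum => J HJ.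
  apply: term_bound => //; [exact: frob2_ge0 | move=> w; exact: frob_bound].
under eq_bigr => I _ do rewrite -!mulr_suml (sum_colblk A HPJ).
by rewrite -mulr_sumr (sum_mask _ HPI) (mulrC F).
Qed.

Lemma Q2 x : Qs x <= (#|PJ|%:R * rhoD * betaD) * vnorm2 (r x).
Proof.
apply: le_trans (_ : \sum_(I in PI) \sum_(J in PJ) rhoD * betaD * vnorm2 (mask I (r x)) <= _).
  apply: ler_sum => I HI; apply: ler_sum => J HJ.
  apply: term_bound => //; first exact: rho_ge0.
  move=> w; apply: le_trans (F1 _ _) _; apply: ler_wpM2r; [exact: vnorm2_ge0 | exact: sigma_le_rho].
under eq_bigr => I _ do rewrite sumr_const.
rewrite -(sum_mask _ HPI) mulr_sumr; apply: ler_sum => I _.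
rewrite -mulr_natl le_eqVlt; apply/orP; left; apply/eqP; ring.
Qed.

Lemma expect_bound c (res := fun x => vnorm2 (r x)) :
  0 < F ->
  (forall x, \sum_(I in PI) \sum_(J in PJ) blkprob A I J * res (dsbgs_step A b alpha I J x) <= c * res x) ->
  forall k x, dsbgs_expect A b alpha PI PJ k x res <= c ^+ k * res x.
Proof.
move=> Fp Hs.
have p0 I J : 0 <= blkprob A I J by rewrite divr_ge0 ?frob2_ge0 // ltW.
case: (pselect (exists x1, 0 < res x1)) => [[x1 Hx1]|Hn].
  have c0 : 0 <= c.
    have := le_trans (sumr_ge0 _ (fun I _ => sumr_ge0 _ (fun J _ => mulr_ge0 (p0 I J) (vnorm2_ge0 _)))) (Hs x1).
    by rewrite pmulr_lge0.
  elim=> [|k IH] x /=; first by rewrite expr0 mul1r.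
  apply: le_trans (_ : \sum_(I in PI) \sum_(J in PJ) blkprob A I J * (c ^+ k * res (dsbgs_step A b alpha I J x)) <= _).
    by apply: ler_sum => I _; apply: ler_sum => J _; apply: ler_wpM2l.
  have -> : \sum_(I in PI) \sum_(J in PJ) blkprob A I J * (c ^+ k * res (dsbgs_step A b alpha I J x))
     = c ^+ k * \sum_(I in PI) \sum_(J in PJ) blkprob A I J * res (dsbgs_step A b alpha I J x).
    rewrite mulr_sumr; apply: eq_bigr => I _; rewrite mulr_sumr; apply: eq_bigr => J _.
    by rewrite mulrCA.
  rewrite exprSr -mulrA; apply: ler_wpM2l; [exact: exprn_ge0 | exact: Hs].
have r0 x : res x = 0.
  apply/eqP; rewrite eq_le vnorm2_ge0 andbT; rewrite leNgt; apply/negP => H; apply: Hn; by exists x.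
have E0 k x : dsbgs_expect A b alpha PI PJ k x res = 0.
  elim: k x => [|k IH] x /=; first exact: r0.
  by rewrite big1 // => I _; rewrite big1 // => J _; rewrite IH mulr0.
by move=> k x; rewrite E0 r0 mulr0.
Qed.

End Main.


Unset Implicit Arguments.
Theorem theorem4 (R : realType) (m n : nat) (A : 'M[R]_(m, n)) (b : 'cV[R]_m)
  (PI : {set {set 'I_m}}) (PJ : {set {set 'I_n}}) (alpha : R) (x0 : 'cV[R]_n) :
  A != 0 ->
  (exists x : 'cV[R]_n, A *m x = b) ->
  partition PI [set: 'I_m] ->
  partition PJ [set: 'I_n] ->
  let beta := dsbgs_beta A PI PJ in
  let rho := dsbgs_rho A PJ in
  let t := #|PJ| in
  let sr2 := sigmarsq A in
  let res := fun x : 'cV[R]_n => vnorm2 (A *m x - b) in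
  (t = n ->
   0 < alpha -> alpha < 2 * sr2 / (beta * frob2 A) ->
   forall k : nat,
     dsbgs_expect A b alpha PI PJ k x0 res
       <= (1 + beta * alpha ^+ 2 - 2 * alpha * sr2 / frob2 A) ^+ k * res x0)
  /\
  ((t < n)%N ->
   0 < alpha -> alpha < 2 * sr2 / (t%:R * rho * beta) ->
   forall k : nat,
     dsbgs_expect A b alpha PI PJ k x0 res
       <= (1 - (2 * alpha * sr2 - t%:R * rho * beta * alpha ^+ 2) / frob2 A) ^+ k
          * res x0).
Proof.
move=> An0 [xs Hxs] HPI HPJ beta rho t sr2 res.
have Fp : 0 < frob2 A.
  rewrite lt_def frob2_ge0 andbT; apply/eqP => /frob2_eq0 H; by rewrite H eqxx in An0.
have Fn0 : frob2 A != 0 by rewrite gt_eqF.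
split.
  move=> _ a0 _ k; apply: (expect_bound Fp) => x.
  have := @one_step _ _ _ _ _ _ _ _ HPI HPJ _ x xs Hxs (ltW a0) Fp (Q1 A b HPI HPJ x).
  have -> : 1 - 2 * alpha * sigmarsq A / frob2 A + alpha ^+ 2 * (betaD A PI PJ * frob2 A) / frob2 A
            = 1 + beta * alpha ^+ 2 - 2 * alpha * sr2 / frob2 A.
    by rewrite /beta /sr2 /betaD; field.
  by [].
move=> _ a0 _ k; apply: (expect_bound Fp) => x.
have := @one_step _ _ _ _ _ _ _ _ HPI HPJ _ x xs Hxs (ltW a0) Fp (Q2 A b PJ HPI x).
have -> : 1 - 2 * alpha * sigmarsq A / frob2 A + alpha ^+ 2 * (#|PJ|%:R * rhoD A PJ * betaD A PI PJ) / frob2 A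
          = 1 - (2 * alpha * sr2 - t%:R * rho * beta * alpha ^+ 2) / frob2 A.
  by rewrite /beta /sr2 /betaD /rho /t /rhoD; field.
by [].
Qed.
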